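(* Let $L$ be a multisorted algebra in the positive existential signature satisfying axioms (1), (2), (3), (7), (8), (9), (10). Let $\varphi$ be an almost morphism from $L$ to the positive existential algebra $A(W)$ of some set $W$. Then there is a set $W^+$ and a morphism $\varphi^+\colon L\to A(W^+)$ of positive existential algebras such that $\ker(\varphi^+)\subseteq\ker(\varphi)$. In particular, if $\varphi$ is injective on each sort, then $\varphi^+$ is an embedding.
   Context: The Boolean prime ideal theorem (equivalently, compactness) is assumed. Signature. There is a sort $n$ for each $n\ge0$. For every function $\alpha\colon\{1,\dots,n\}\to\{1,\dots,k\}$ there is a unary function symbol (''substitution'') $\alpha\colon n\to k$ (argument of sort $n$, value of sort $k$). Each sort has $0,1,\vee,\wedge$; for each $n$ there is $\exists\colon n+1\to n$ (positive existential signature). For $\alpha\colon k\to n$, $\beta\colon n\to m$, $\beta\circ\alpha$ is the substitution symbol of the composite function. The associated cylindrification of $\exists\colon n+1\to n$ is $c\colon n\to n+1$, $c(i)=i$; $\exists^{(n)}$ is $n$-fold projection; $x\le y$ means $x=x\wedge y$. For a set $W$: $\alpha^{\mathrm{tuple}}(x_1,\dots,x_k)=(x_{\alpha(1)},\dots,x_{\alpha(n)})$, $\alpha^{\mathrm{relation}}(r)=\{\bar x\in W^k:\alpha^{\mathrm{tuple}}(\bar x)\in r\}$. The positive existential algebra $A(W)$ interprets sort $n$ as $\mathcal P(W^n)$, $\alpha$ as $\alpha^{\mathrm{relation}}$, $0,1,\vee,\wedge$ as $\emptyset,W^n,\cup,\cap$, and $\exists(r)=\{\bar x:\exists y\,(\bar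 x,y)\in r\}$. An almost morphism $\varphi\colon L\to A(W)$ is a sort-preserving family of maps commuting with all substitutions and with $0,1,\vee,\wedge$, and satisfying $\exists(\varphi(r))\subseteq\varphi(\exists(r))$. A morphism additionally commutes with $\exists$. For a map $f$, $\ker(f)=\{(a,a'): a,a' \text{ of the same sort}, f(a)=f(a')\}$. Axioms: (1) each sort is a bounded distributive lattice; (2) substitutions preserve $0,1,\vee,\wedge$; (3) $(\beta\circ\alpha)(r)=\beta(\alpha(r))$; (7) $\exists(0)=0$, $\exists(r\vee s)=\exists(r)\vee\exists(s)$; (8) $r\le c(\exists(r))$; (9) $\exists(r\wedge c(s))=\exists(r)\wedge s$; (10) for substitutions $\alpha_i\colon k_i\to m$ ($i=1,\dots,n$) and $\beta_i\colon k_i+1\to m+n$ with $\beta_i(j)=\alpha_i(j)$ for $j\le k_i$, $\beta_i(k_i+1)=m+i$: $\exists^{(n)}(\bigwedge_i\beta_i(r_i))=\bigwedge_i\alpha_i(\exists(r_i))$ for all $r_i$ of sort $k_i+1$. *)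

(* Defs.v *)
From mathcomp Require Import all_boot.
Set Implicit Arguments. Unset Strict Implicit. Unset Printing Implicit Defensive.

(* Conventions: variables are 0-indexed, so {1,...,n} is 'I_n.
   A substitution symbol alpha : n -> k is a function 'I_n -> 'I_k;
   it acts from sort n to sort k. *)

Record PEAlg := {
  car  :> nat -> Type;
  sub  : forall n k : nat, ('I_n -> 'I_k) -> car n -> car k;
  zero : forall n, car n;
  one  : forall n, car n;
  join : forall n, car n -> car n -> car n;
  meet : forall n, car n -> car n -> car n;
  ex   : forall n, car n.+1 -> car n
}.

Section PEAx.
Variable L : PEAlg.

Definition le n (x y : L n) : Prop := x = meet x y.

Definition cyl n : 'I_n -> 'I_n.+1 := widen_ord (leqnSn n).

(* n-fold projection exists^(n) : sort (n + m) -> sort m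
   (removes the last n variables) *)
Fixpoint exn (m n : nat) : L (n + m) -> L m :=
  match n return L (n + m) -> L m with
  | 0 => fun x => x
  | n'.+1 => fun x => @exn m n' (@ex L (n' + m) x)
  end.

Definition ax1 : Prop := forall n (x y z : L n),
  join x (join y z) = join (join x y) z /\
  meet x (meet y z) = meet (meet x y) z /\
  join x y = join y x /\ meet x y = meet y x /\
  join x (meet x y) = x /\ meet x (join x y) = x /\
  meet x (join y z) = join (meet x y) (meet x z) /\
  join (zero L n) x = x /\ meet (one L n) x = x.

Definition ax2 : Prop := forall n k (a : 'I_n -> 'I_k) (x y : L n),
  [/\ sub a (zero L n) = zero L k, sub a (one L n) = one L k,
      sub a (join x y) = join (sub a x) (sub a y) &
      sub a (meet x y) = meet (sub a x) (sub a y)].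

Definition ax3 : Prop := forall k n m (a : 'I_k -> 'I_n) (b : 'I_n -> 'I_m)
  (r : L k), sub (b \o a) r = sub b (sub a r).

Definition ax7 : Prop := forall n (r s : L n.+1),
  ex (zero L n.+1) = zero L n /\ ex (join r s) = join (ex r) (ex s).

Definition ax8 : Prop := forall n (r : L n.+1), le r (sub (@cyl n) (ex r)).

Definition ax9 : Prop := forall n (r : L n.+1) (s : L n),
  ex (meet r (sub (@cyl n) s)) = meet (ex r) s.

(* (10) with alpha_i : k_i -> m, beta_i : k_i+1 -> m+n (sort written n + m),
   beta_i(j) = alpha_i(j) for the first k_i variables and beta_i(last) = m+i
   (0-indexed: the i-th of the n new variables). *)
Definition ax10 : Prop := forall (n m : nat) (k : 'I_n -> nat)
  (a : forall i, 'I_(k i) -> 'I_m) (b : forall i, 'I_(k i).+1 -> 'I_(n + m)),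
  (forall i (j : 'I_(k i)), val (b i (widen_ord (leqnSn (k i)) j)) = val (a i j)) ->
  (forall i, val (b i ord_max) = m + i) ->
  forall r : forall i, L (k i).+1,
    @exn m n (\big[@meet L (n + m)/one L (n + m)]_(i < n) sub (b i) (r i))
    = \big[@meet L m/one L m]_(i < n) sub (a i) (ex (r i)).

Definition PE_axioms_hold : Prop :=
  ax1 /\ ax2 /\ ax3 /\ ax7 /\ ax8 /\ ax9 /\ ax10.

End PEAx.

(* The positive existential algebra A(W): sort n is P(W^n),
   with W^n represented as 'I_n -> W and subsets as predicates. *)
Definition RelW (W : Type) (n : nat) := ('I_n -> W) -> Prop.

Definition subW (W : Type) n k (a : 'I_n -> 'I_k) (r : RelW W n) : RelW W k :=
  fun x => r (fun i => x (a i)).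

Definition snoc (W : Type) n (x : 'I_n -> W) (y : W) : 'I_n.+1 -> W :=
  fun i => match unlift ord_max i with Some j => x j | None => y end.

Definition exW (W : Type) n (r : RelW W n.+1) : RelW W n :=
  fun x => exists y, r (snoc x y).

Section Morphisms.
Variables (L : PEAlg) (W : Type).
Variable phi : forall n, L n -> RelW W n.

Definition almost_morphism : Prop :=
  (forall n k (a : 'I_n -> 'I_k) (r : L n), phi (sub a r) = subW a (phi r)) /\
      (forall n, phi (zero L n) = (fun _ => False)) /\
      (forall n, phi (one L n) = (fun _ => True)) /\
      (forall n (r s : L n), phi (join r s) = (fun x => phi r x \/ phi s x)) /\
      (forall n (r s : L n), phi (meet r s) = (fun x => phi r x /\ phi s x)) /\
      (forall n (r : L n.+1) x, exW (phi r) x -> phi (ex r) x).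

Definition morphism : Prop :=
  almost_morphism /\ forall n (r : L n.+1), phi (ex r) = exW (phi r).

End Morphisms.

(* Main.v *)
Require Import Defs.
From mathcomp Require Import all_boot.
From mathcomp Require classical_sets.
From Stdlib Require Import Classical ClassicalEpsilon FunctionalExtensionality PropExtensionality.
From Stdlib Require Eqdep_dec.
Set Implicit Arguments. Unset Strict Implicit. Unset Printing Implicit Defensive.

Lemma no_ord0 (i : 'I_0) : False. Proof. by case: i. Qed.

Lemma In_tnth (T : Type) (s : seq T) x : List.In x s -> exists i : 'I_(size s), tnth (in_tuple s) i = x.
Proof.
elim: s => [|y s IH] //= [->|/IH [i hi]].
  by exists ord0; rewrite (tnth_nth x).
exists (lift ord0 i); rewrite (tnth_nth x) /=.
by rewrite (tnth_nth x) in hi.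
Qed.

Lemma tnth_In (T : Type) (s : seq T) (i : 'I_(size s)) : List.In (tnth (in_tuple s) i) s.
Proof.
elim: s i => [|y s IH] i; first by case: i.
case: i => [[|i] hi]; rewrite (tnth_nth y) /=; first by left.
right; have hi' : i < size s by [].
have := IH (Ordinal hi'); by rewrite (tnth_nth y).
Qed.

Lemma In_map_seq (T1 T2 : Type) (f : T1 -> T2) x s : List.In x s -> List.In (f x) (map f s).
Proof. elim: s => [|y s IH] //= [->|h]; [by left|by right; apply: IH]. Qed.

Lemma In_mem (T : eqType) (x : T) s : x \in s -> List.In x s.
Proof. elim: s => [|y s IH] //=; rewrite in_cons => /orP [/eqP ->|h]; [by left|by right; apply: IH]. Qed.

Lemma In_enum n (i : 'I_n) : List.In i (enum 'I_n).
Proof. by apply: In_mem; rewrite mem_enum. Qed.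

Lemma In_app_l (T : Type) (x : T) s1 s2 : List.In x s1 -> List.In x (s1 ++ s2).
Proof. elim: s1 => [|y s IH] //= [->|h]; [by left|by right; apply: IH]. Qed.
Lemma In_app_r (T : Type) (x : T) s1 s2 : List.In x s2 -> List.In x (s1 ++ s2).
Proof. by elim: s1 => [|y s IH] //= h; right; apply: IH. Qed.

Definition cpos (T : Type) n (f : 'I_n -> T) (x : T) : option 'I_n :=
  match excluded_middle_informative (exists i, f i = x) with
  | left H => Some (proj1_sig (constructive_indefinite_description _ H))
  | right _ => None end.

Lemma cpos_spec T n (f : 'I_n -> T) x i : cpos f x = Some i -> f i = x.
Proof.
rewrite /cpos; case: excluded_middle_informative => // H [<-].
exact: proj2_sig (constructive_indefinite_description _ H).
Qed.

Lemma cpos_ex T n (f : 'I_n -> T) x : (exists i, f i = x) -> exists i, cpos f x = Some i.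
Proof. by rewrite /cpos; case: excluded_middle_informative => // H _; eexists. Qed.

Lemma choice_ord (T : Type) n (P : 'I_n -> T -> Prop) : (forall i, exists t, P i t) -> exists f, forall i, P i (f i).
Proof.
move=> H; exists (fun i => proj1_sig (constructive_indefinite_description _ (H i))) => i.
exact: proj2_sig (constructive_indefinite_description _ (H i)).
Qed.

Section PFT.
Variables (T : Type) (le : T -> T -> Prop) (mt jn : T -> T -> T).
Hypothesis le_refl : forall x, le x x.
Hypothesis le_trans : forall x y z, le x y -> le y z -> le x z.
Hypothesis mt_l : forall x y, le (mt x y) x.
Hypothesis mt_r : forall x y, le (mt x y) y.
Hypothesis mt_glb : forall x y z, le z x -> le z y -> le z (mt x y).
Hypothesis jn_l : forall x y, le x (jn x y).
Hypothesis jn_r : forall x y, le y (jn x y).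
Hypothesis jn_lub : forall x y z, le x z -> le y z -> le (jn x y) z.
Hypothesis distr : forall x y z, le (mt x (jn y z)) (jn (mt x y) (mt x z)).

Definition upc (F : T -> Prop) := forall x y, le x y -> F x -> F y.
Definition mtc (F : T -> Prop) := forall x y, F x -> F y -> F (mt x y).
Definition dnc (J : T -> Prop) := forall x y, le x y -> J y -> J x.
Definition jnc (J : T -> Prop) := forall x y, J x -> J y -> J (jn x y).

Lemma pft (F J : T -> Prop) : upc F -> mtc F -> (exists x, F x) -> dnc J -> jnc J ->
  (forall x, F x -> J x -> False) ->
  exists Q : T -> Prop, [/\ (forall x, F x -> Q x), (forall x, Q x -> J x -> False),
     upc Q, mtc Q & (forall x y, Q (jn x y) -> Q x \/ Q y)].
Proof.
move=> uF mF [x0 Fx0] dJ jJ dFJ.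
pose cand (A : T -> Prop) := [/\ upc A, mtc A, (forall x, F x -> A x) & (forall x, A x -> J x -> False)].
pose P (A : T -> Prop) := (forall x, ~ A x) \/ cand A.
have [A [PA Amax]] : exists A, P A /\ forall B, classical_sets.proper A B -> ~ P B.
  apply: classical_sets.Zorn_bigcup => Fm sFm tot.
  case: (classic (exists X, Fm X /\ cand X)) => [[X0 [FX0 cX0]]|nc]; last first.
    left => x [X FX Xx]. case: (sFm X FX) => [hX|cX]; first by apply: (hX x).
    by apply: nc; exists X.
  have memc : forall X x, Fm X -> X x -> cand X.
    move=> X x FX Xx; case: (sFm X FX) => // hX; by case: (hX x).
  right; split.
  - move=> x y lxy [X FX Xx]; exists X => //. by case: (memc X x FX Xx) => u _ _ _; apply: u lxy Xx.
  - move=> x y [X FX Xx] [Y FY Yy].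
    case: (tot X Y FX FY) => sXY.
      exists Y => //. by case: (memc Y y FY Yy) => _ m _ _; apply: m; [apply: sXY|].
    exists X => //. by case: (memc X x FX Xx) => _ m _ _; apply: m; [|apply: sXY].
  - by move=> x Fx; exists X0 => //; case: cX0 => _ _ h _; apply: h.
  - move=> x [X FX Xx] Jx. by case: (memc X x FX Xx) => _ _ _ h; apply: (h x).
have cA : cand A.
  case: PA => // hA; exfalso; apply: (Amax F).
    split; first by move=> x Ax; case: (hA x).
    by move=> sFA; apply: (hA x0); apply: sFA.
  by right; split.
case: cA => uA mA FA dA; exists A; split => // x y Axy.
apply: NNPP => nxy.
have nx : ~ A x by move=> h; apply: nxy; left.
have ny : ~ A y by move=> h; apply: nxy; right.
pose G z := fun t => exists m, A m /\ le (mt m z) t.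
have Gnot : forall z, ~ A z -> exists m j, A m /\ J j /\ le (mt m z) j.
  move=> z nz; apply: NNPP => hn.
  apply: (Amax (G z)); last first.
    right; split.
    - by move=> s t lst [m [Am lm]]; exists m; split => //; apply: le_trans lst.
    - move=> s t [m1 [Am1 l1]] [m2 [Am2 l2]]; exists (mt m1 m2); split; first by apply: mA.
      apply: mt_glb.
        apply: le_trans l1; apply: mt_glb; last by apply: mt_r.
        by apply: le_trans (mt_l _ _) (mt_l _ _).
      apply: le_trans l2; apply: mt_glb; last by apply: mt_r.
      by apply: le_trans (mt_l _ _) (mt_r _ _).
    - by move=> s Fs; exists s; split; [apply: FA|apply: mt_l].
    - move=> s [m [Am lm]] Js; apply: hn; exists m, s; split=> //.
  split.
    by move=> s As; exists s; split => //; apply: mt_l.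
  move=> sGA; apply: nz; apply: sGA. exists x0; split; [by apply: FA| by apply: mt_r].
have [m1 [j1 [Am1 [Jj1 l1]]]] := Gnot x nx.
have [m2 [j2 [Am2 [Jj2 l2]]]] := Gnot y ny.
apply: (dA (jn j1 j2)); last by apply: jJ.
apply: (uA (mt (mt m1 m2) (jn x y))); last by apply: (mA _ _ (mA _ _ Am1 Am2) Axy).
apply: le_trans (distr _ _ _) _; apply: jn_lub.
  apply: le_trans (le_trans _ l1) (jn_l _ _); apply: mt_glb; last by apply: mt_r.
  by apply: le_trans (mt_l _ _) (mt_l _ _).
apply: le_trans (le_trans _ l2) (jn_r _ _); apply: mt_glb; last by apply: mt_r.
by apply: le_trans (mt_l _ _) (mt_r _ _).
Qed.
End PFT.

Lemma unlift_widen n (i : 'I_n) : unlift ord_max (widen_ord (leqnSn n) i) = Some i.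
Proof.
have -> : widen_ord (leqnSn n) i = lift ord_max i by apply: val_inj; rewrite /= /bump leqNgt ltn_ord.
by rewrite liftK.
Qed.

Lemma snoc_widen (V : Type) n (x : 'I_n -> V) y i : snoc x y (widen_ord (leqnSn n) i) = x i.
Proof. by rewrite /snoc unlift_widen. Qed.

Lemma snoc_max (V : Type) n (x : 'I_n -> V) y : snoc x y ord_max = y.
Proof. by rewrite /snoc unlift_none. Qed.

Section Lat.
Variable L : PEAlg.
Hypothesis A1 : ax1 L.
Hypothesis A2 : ax2 L.
Hypothesis A3 : ax3 L.
Hypothesis A7 : ax7 L.
Hypothesis A8 : ax8 L.
Hypothesis A9 : ax9 L.
Hypothesis A10 : ax10 L.

Local Notation mt := (@Defs.meet L _).
Local Notation jn := (@Defs.join L _).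
Local Notation lel := (@le L _).

Lemma joinA n (x y z : L n) : jn x (jn y z) = jn (jn x y) z. Proof. by case: (A1 x y z). Qed.
Lemma meetA n (x y z : L n) : mt x (mt y z) = mt (mt x y) z. Proof. by case: (A1 x y z) => _ []. Qed.
Lemma joinC n (x y : L n) : jn x y = jn y x. Proof. by case: (A1 x y x) => _ [] _ []. Qed.
Lemma meetC n (x y : L n) : mt x y = mt y x. Proof. by case: (A1 x y x) => _ [] _ [] _ []. Qed.
Lemma joinKm n (x y : L n) : jn x (mt x y) = x. Proof. by case: (A1 x y x) => _ [] _ [] _ [] _ []. Qed.
Lemma meetKj n (x y : L n) : mt x (jn x y) = x. Proof. by case: (A1 x y x) => _ [] _ [] _ [] _ [] _ []. Qed.
Lemma meetDj n (x y z : L n) : mt x (jn y z) = jn (mt x y) (mt x z).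
Proof. by case: (A1 x y z) => _ [] _ [] _ [] _ [] _ [] _ []. Qed.
Lemma join0 n (x : L n) : jn (zero L n) x = x. Proof. by case: (A1 x x x) => _ [] _ [] _ [] _ [] _ [] _ [] _ []. Qed.
Lemma meet1 n (x : L n) : mt (Defs.one L n) x = x. Proof. by case: (A1 x x x) => _ [] _ [] _ [] _ [] _ [] _ [] _ []. Qed.

Lemma meetxx n (x : L n) : mt x x = x.
Proof. by rewrite -{2}(joinKm x x) meetKj. Qed.

Lemma le_refl n (x : L n) : lel x x. Proof. by rewrite /le meetxx. Qed.
Lemma le_trans n (x y z : L n) : lel x y -> lel y z -> lel x z.
Proof. by rewrite /le => hxy hyz; rewrite {1}hxy {1}hyz meetA -hxy. Qed.
Lemma mt_l n (x y : L n) : lel (mt x y) x.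
Proof. by rewrite /le (meetC _ x) meetA meetxx. Qed.
Lemma mt_r n (x y : L n) : lel (mt x y) y.
Proof. by rewrite /le -meetA meetxx. Qed.
Lemma mt_glb n (x y z : L n) : lel z x -> lel z y -> lel z (mt x y).
Proof. by rewrite /le => hx hy; rewrite meetA -hx -hy. Qed.
Lemma jn_l n (x y : L n) : lel x (jn x y). Proof. by rewrite /le meetKj. Qed.
Lemma jn_r n (x y : L n) : lel y (jn x y). Proof. by rewrite joinC; apply: jn_l. Qed.
Lemma le_join n (x y : L n) : lel x y -> jn x y = y.
Proof. by rewrite /le => ->; rewrite meetC joinC joinKm. Qed.
Lemma jn_lub n (x y z : L n) : lel x z -> lel y z -> lel (jn x y) z.
Proof.
rewrite /le => hx hy; rewrite meetC meetDj meetC -hx meetC -hy //.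
Qed.
Lemma distr n (x y z : L n) : lel (mt x (jn y z)) (jn (mt x y) (mt x z)).
Proof. by rewrite meetDj; apply: le_refl. Qed.
Lemma le0 n (x : L n) : lel (zero L n) x.
Proof. by rewrite /le -{1}(join0 x) meetKj. Qed.
Lemma le1 n (x : L n) : lel x (Defs.one L n).
Proof. by rewrite /le meetC meet1. Qed.
Lemma mt_mono n (x y x' y' : L n) : lel x x' -> lel y y' -> lel (mt x y) (mt x' y').
Proof.
move=> h1 h2; apply: mt_glb; first by apply: le_trans (mt_l _ _) h1.
by apply: le_trans (mt_r _ _) h2.
Qed.
Lemma jn_mono n (x y x' y' : L n) : lel x x' -> lel y y' -> lel (jn x y) (jn x' y').
Proof.
move=> h1 h2; apply: jn_lub; first by apply: le_trans h1 (jn_l _ _).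
by apply: le_trans h2 (jn_r _ _).
Qed.

Lemma sub_mono n k (a : 'I_n -> 'I_k) (x y : L n) : lel x y -> lel (sub a x) (sub a y).
Proof. by rewrite /le => h; rewrite {1}h; case: (A2 a x y). Qed.
Lemma sub_meet n k (a : 'I_n -> 'I_k) (x y : L n) : sub a (mt x y) = mt (sub a x) (sub a y).
Proof. by case: (A2 a x y). Qed.
Lemma sub_join n k (a : 'I_n -> 'I_k) (x y : L n) : sub a (jn x y) = jn (sub a x) (sub a y).
Proof. by case: (A2 a x y). Qed.
Lemma sub_one n k (a : 'I_n -> 'I_k) : sub a (Defs.one L n) = Defs.one L k.
Proof. by case: (A2 a (Defs.one L n) (Defs.one L n)). Qed.
Lemma sub_zero n k (a : 'I_n -> 'I_k) : sub a (zero L n) = zero L k.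
Proof. by case: (A2 a (Defs.one L n) (Defs.one L n)). Qed.

Lemma ex_join n (x y : L n.+1) : ex (jn x y) = jn (ex x) (ex y). Proof. by case: (A7 x y). Qed.
Lemma ex_zero n : ex (zero L n.+1) = zero L n. Proof. by case: (A7 (zero L n.+1) (zero L n.+1)). Qed.
Lemma ex_mono n (x y : L n.+1) : lel x y -> lel (ex x) (ex y).
Proof. by move=> /le_join h; rewrite -h ex_join; apply: jn_l. Qed.

Lemma exn_join m n (x y : L (n + m)) : exn (jn x y) = jn (exn x) (exn y).
Proof. elim: n x y => [|n IH] x y //=; by rewrite ex_join IH. Qed.
Lemma exn_zero m n : exn (zero L (n + m)) = zero L m.
Proof. elim: n => [|n IH] //=; by rewrite ex_zero IH. Qed.
Lemma exn_mono m n (x y : L (n + m)) : lel x y -> lel (exn x) (exn y).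
Proof. by move=> /le_join h; rewrite -h exn_join; apply: jn_l. Qed.

Definition widenW m k : 'I_m -> 'I_(k + m) := fun i => widen_ord (leq_addl k m) i.

Lemma exn_meetW m k (x : L (k + m)) (q : L m) :
  exn (mt x (sub (@widenW m k) q)) = mt (exn x) (sub id q).
Proof.
elim: k x => [|k IH] x /=.
  congr (mt x (sub _ q)); apply: functional_extensionality => i; exact: val_inj.
have -> : @widenW m k.+1 = (@cyl (k + m)) \o (@widenW m k).
  by apply: functional_extensionality => i; exact: val_inj.
by rewrite A3 A9 IH.
Qed.


Definition pm (V : Type) (p : forall n, L n -> RelW V n) :=
 [/\ (forall n k (a : 'I_n -> 'I_k) r x, p k (sub a r) x <-> p n r (fun i => x (a i))),
     (forall n x, ~ p n (zero L n) x), (forall n x, p n (Defs.one L n) x),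
     (forall n r s x, p n (jn r s) x <-> p n r x \/ p n s x) &
     (forall n r s x, p n (mt r s) x <-> p n r x /\ p n s x)].

Lemma pm_mono V p n (x y : L n) z : @pm V p -> lel x y -> p n x z -> p n y z.
Proof. by case=> _ _ _ _ hm; rewrite /le => -> /hm []. Qed.

Lemma pm_exlow V p n (r : L n.+1) x y : @pm V p -> p _ r (snoc x y) -> p _ (ex r) x.
Proof.
move=> hp h; have := pm_mono hp (A8 r) h; case: hp => hs _ _ _ _ /hs.
have -> : (fun i => snoc x y (cyl i)) = x by apply: functional_extensionality => i; apply: snoc_widen.
done.
Qed.

Lemma bigmeet_le m k (f : 'I_k -> L m) j : lel (\big[@Defs.meet L m/Defs.one L m]_(i < k) f i) (f j).
Proof.
elim: k f j => [|k IH] f j; first by case: j.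
rewrite big_ord_recl; case: (unliftP ord0 j) => [j'|] ->; first by apply: le_trans (mt_r _ _) (IH _ _).
exact: mt_l.
Qed.

Lemma pm_big V p m k (f : 'I_k -> L m) x : @pm V p ->
  p m (\big[@Defs.meet L m/Defs.one L m]_(i < k) f i) x <-> forall j, p m (f j) x.
Proof.
move=> hp; split.
  by move=> h j; apply: pm_mono hp (bigmeet_le _ _) h.
case: hp => _ _ h1 _ hm.
elim: k f => [|k IH] f hj; first by rewrite big_ord0.
rewrite big_ord_recl; apply/hm; split; first exact: hj.
by apply: IH => j; apply: hj.
Qed.

Definition primef n (P : L n -> Prop) :=
  [/\ (forall x y, lel x y -> P x -> P y), (forall x y, P (mt x y) <-> P x /\ P y),
      P (Defs.one L n), ~ P (zero L n) & (forall x y, P (jn x y) <-> P x \/ P y)].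

Lemma LL (V : Type) (p : forall n, L n -> RelW V n) : pm p ->
 forall m (b : 'I_m -> V) k (n : 'I_k -> nat) (r : forall j, L (n j).+1)
   (al : forall j, 'I_(n j) -> 'I_m) (be : forall j, 'I_(n j).+1 -> 'I_(k + m)),
 (forall j i, val (be j (widen_ord (leqnSn (n j)) i)) = val (al j i)) ->
 (forall j, val (be j ord_max) = m + j) ->
 (forall j, p _ (ex (r j)) (fun i => b (al j i))) ->
 exists P : L (k + m) -> Prop, [/\ primef P,
   (forall q, P (sub (@widenW m k) q) <-> p m q b) &
   (forall j, P (sub (be j) (r j)))].
Proof.
move=> hp m b k n r al be hw hmx hleg.
pose Phi := \big[@Defs.meet L (k + m)/Defs.one L (k + m)]_(j < k) sub (be j) (r j).
have hPhi : exn Phi = \big[@Defs.meet L m/Defs.one L m]_(j < k) sub (al j) (ex (r j)).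
  exact: A10.
have pPhi : p m (exn Phi) b.
  rewrite hPhi; apply/(pm_big _ _ hp) => j.
  by case: hp => hs _ _ _ _; apply/hs.
have hsid : forall q, p m (sub id q) b <-> p m q b.
  by move=> q; case: hp => hs _ _ _ _; apply: hs.
pose G s := p m (exn (mt Phi s)) b.
pose F0 s := exists q, p m q b /\ lel (mt Phi (sub (@widenW m k) q)) s.
pose J s := ~ G s.
have GW : forall q, G (sub (@widenW m k) q) <-> p m q b.
  move=> q; rewrite /G exn_meetW //; case: hp => _ _ _ _ hm; rewrite hm hsid; tauto.
have Gmono : forall x y, lel x y -> G x -> G y.
  move=> x y lxy; apply: pm_mono => //; apply: exn_mono => //; apply: mt_mono => //; exact: le_refl.
have [Q [FQ QJ uQ mQ prQ]] : exists Q : L (k + m) -> Prop, [/\ (forall x, F0 x -> Q x),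
   (forall x, Q x -> J x -> False), upc (@le L _) Q, mtc mt Q & (forall x y, Q (jn x y) -> Q x \/ Q y)].
  apply: (@pft _ (@le L _) mt jn); try (by move=> *; apply: le_refl);
    try (by move=> *; apply: le_trans; eassumption);
    try (by move=> *; apply: mt_l); try (by move=> *; apply: mt_r); try (by move=> *; apply: mt_glb);
    try (by move=> *; apply: jn_l); try (by move=> *; apply: jn_r); try (by move=> *; apply: jn_lub);
    try (by move=> *; apply: distr).
  - by move=> x y lxy [q [pq lq]]; exists q; split => //; apply: le_trans lq lxy.
  - move=> x y [q1 [pq1 l1]] [q2 [pq2 l2]]; exists (mt q1 q2); split.
      by case: hp => _ _ _ _ hm; apply/hm.
    rewrite sub_meet //; apply: mt_glb => //.
      apply: le_trans l1; apply: mt_mono => //; [exact: le_refl|exact: mt_l].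
    apply: le_trans l2; apply: mt_mono => //; [exact: le_refl|exact: mt_r].
  - exists (mt Phi (sub (@widenW m k) (Defs.one L m))); exists (Defs.one L m); split; last exact: le_refl.
    by case: hp.
  - by move=> x y lxy Jy Gx; apply: Jy; apply: (Gmono _ _ lxy Gx).
  - move=> x y Jx Jy; rewrite /J /G meetDj // exn_join //; case: hp => _ _ _ hj _.
    by rewrite hj; case.
  - move=> x [q [pq lq]]; apply; apply: (Gmono _ _ lq).
    rewrite /G meetA meetxx exn_meetW //; case: hp => _ _ _ _ hm; rewrite hm hsid; tauto.
have QPhi : Q Phi.
  apply: FQ; exists (Defs.one L m); split; first by case: hp.
  exact: mt_l.
have Qzero : ~ Q (zero L (k + m)).
  move=> Qz; apply: (QJ _ Qz) => Gz; have h0 : ~ p m (zero L m) b by case: hp.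
  apply: h0; apply: (pm_mono hp _ Gz); apply: le_trans (exn_mono (mt_r Phi _)) _.
  rewrite exn_zero; apply: le_refl.
exists Q; split.
- split => //.
  + move=> x y; split; first by move=> h; split; apply: uQ h; [exact: mt_l|exact: mt_r].
    by case => hx hy; apply: mQ.
  + by apply: uQ QPhi; apply: le1.
  + move=> x y; split; first exact: prQ.
    by case=> h; apply: uQ h; [exact: jn_l|exact: jn_r].
- move=> q; split.
    move=> Qq; apply/GW; apply: NNPP => nG; exact: QJ Qq nG.
  move=> pq; apply: FQ; exists q; split => //; exact: mt_r.
- by move=> j; apply: uQ QPhi; apply: bigmeet_le.
Qed.


Record dem (V : Type) (p : forall n, L n -> RelW V n) :=
  Dem { dn : nat; dr : L dn.+1; dx : 'I_dn -> V; dok : p _ (ex dr) dx }.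
Arguments dx {V p} d _.
Arguments dr {V p} d.
Arguments dn {V p} d.

Section OneStep.
Variables (V : Type) (p : forall n, L n -> RelW V n).
Arguments p : clear implicits.
Hypothesis hp : pm p.

Definition V' := (V + dem p)%type.
Definition cfg := (seq V * seq (dem p))%type.
Definition inc (c : cfg) (e : V') : Prop :=
  match e with inl w => List.In w c.1 | inr d => List.In d c.2 end.
Definition okc (c : cfg) := forall d, List.In d c.2 -> forall i, List.In (dx d i) c.1.

Record localP (c : cfg) (Vc : forall n, L n -> RelW V' n) : Prop := {
  lp_sub : forall n k (a : 'I_n -> 'I_k) r (z : 'I_k -> V'), (forall i, inc c (z i)) ->
     (Vc k (sub a r) z <-> Vc n r (fun i => z (a i)));
  lp_zero : forall n z, ~ Vc n (zero L n) z;
  lp_one : forall n z, (forall i, inc c (z i)) -> Vc n (Defs.one L n) z;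
  lp_join : forall n r s z, (forall i, inc c (z i)) -> (Vc n (jn r s) z <-> Vc n r z \/ Vc n s z);
  lp_meet : forall n r s z, (forall i, inc c (z i)) -> (Vc n (mt r s) z <-> Vc n r z /\ Vc n s z);
  lp_base : forall n r (x : 'I_n -> V), (forall i, List.In (x i) c.1) ->
     (Vc n r (fun i => inl (x i)) <-> p n r x);
  lp_dem : forall d, List.In d c.2 -> Vc _ (dr d) (snoc (fun i => inl (dx d i)) (inr d)) }.

Lemma local_ex c : okc c -> exists Vc, localP c Vc.
Proof.
move=> okc_c.
pose m := size c.1; pose b : 'I_m -> V := fun i => tnth (in_tuple c.1) i.
pose k := size c.2; pose ds : 'I_k -> dem p := fun j => tnth (in_tuple c.2) j.
have shP : forall j : 'I_k, m + j < k + m by move=> j; rewrite addnC ltn_add2r.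
pose shiftD (j : 'I_k) : 'I_(k + m) := Ordinal (shP j).
pose pos (e : V') : option 'I_(k + m) :=
  match e with inl w => omap (@widenW m k) (cpos b w) | inr d => omap shiftD (cpos ds d) end.
have posU : forall e t1 t2, pos e = Some t1 -> pos e = Some t2 -> t1 = t2 by move=> e t1 t2 -> [].
have posE : forall e, inc c e -> exists t, pos e = Some t.
  move=> [w|d] /= hin; rewrite /pos.
    by have [i ->] := cpos_ex (f := b) (In_tnth hin); eexists.
  by have [i ->] := cpos_ex (f := ds) (In_tnth hin); eexists.
have hal : forall j i, exists i', cpos b (dx (ds j) i) = Some i'.
  by move=> j i; apply: cpos_ex; apply: In_tnth; apply: okc_c; apply: tnth_In.
pose al j i := proj1_sig (constructive_indefinite_description _ (hal j i)).
have alP : forall j i, cpos b (dx (ds j) i) = Some (al j i).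
  by move=> j i; exact: proj2_sig (constructive_indefinite_description _ (hal j i)).
pose be j := snoc (fun i => @widenW m k (al j i)) (shiftD j).
have hleg : forall j, p _ (ex (dr (ds j))) (fun i => b (al j i)).
  move=> j; have -> : (fun i => b (al j i)) = dx (ds j).
    by apply: functional_extensionality => i; apply: cpos_spec; apply: alP.
  exact: dok.
have [P [[uP mP P1 P0 jP] PW Pbe]] := @LL V p hp m b k (fun j => dn (ds j)) (fun j => dr (ds j)) al be
  (fun j i => congr1 val (snoc_widen _ _ _)) (fun j => congr1 val (snoc_max _ _)) hleg.
pose Vc n (r : L n) (z : 'I_n -> V') := exists a : 'I_n -> 'I_(k + m), (forall i, pos (z i) = Some (a i)) /\ P (sub a r).
have aU : forall n (z : 'I_n -> V') a1 a2, (forall i, pos (z i) = Some (a1 i)) -> (forall i, pos (z i) = Some (a2 i)) -> a1 = a2.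
  by move=> n z a1 a2 h1 h2; apply: functional_extensionality => i; apply: posU (h1 i) (h2 i).
have aE : forall n (z : 'I_n -> V'), (forall i, inc c (z i)) -> exists a, forall i, pos (z i) = Some (a i).
  by move=> n z hz; apply: (@choice_ord _ n (fun i t => pos (z i) = Some t)) => i; apply: posE.
have VcE : forall n r (z : 'I_n -> V') a, (forall i, pos (z i) = Some (a i)) -> (Vc n r z <-> P (sub a r)).
  move=> n r z a ha; split; last by move=> h; exists a.
  by case=> a' [ha' h]; rewrite (aU _ _ _ _ ha ha').
exists Vc; split.
- move=> n k' al' r z hz; have [a ha] := aE _ _ hz.
  rewrite (VcE _ _ _ _ ha) (VcE _ _ _ (fun i => a (al' i))) //.
  by rewrite -A3.
- by move=> n z [a [_ h]]; rewrite sub_zero in h.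
- by move=> n z hz; have [a ha] := aE _ _ hz; rewrite (VcE _ _ _ _ ha) sub_one.
- by move=> n r s z hz; have [a ha] := aE _ _ hz; rewrite !(VcE _ _ _ _ ha) sub_join.
- by move=> n r s z hz; have [a ha] := aE _ _ hz; rewrite !(VcE _ _ _ _ ha) sub_meet.
- move=> n r x hx.
  have [a' ha'] : exists a' : 'I_n -> 'I_m, forall i, cpos b (x i) = Some (a' i).
    by apply: (@choice_ord _ n (fun i t => cpos b (x i) = Some t)) => i; apply: cpos_ex; apply: In_tnth.
  rewrite (VcE _ _ _ (fun i => @widenW m k (a' i))); last by move=> i /=; rewrite ha'.
  have -> : sub (fun i => @widenW m k (a' i)) r = sub (@widenW m k) (sub a' r) by rewrite -A3.
  rewrite PW; case: hp => hs _ _ _ _; rewrite (hs _ _ a').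
  have -> : (fun i => b (a' i)) = x by apply: functional_extensionality => i; apply: cpos_spec (ha' i).
  done.
- move=> d hd; have [j hj] := cpos_ex (f := ds) (In_tnth hd).
  have hdj : ds j = d by apply: cpos_spec.
  subst d; exists (be j); split; last exact: Pbe.
  move=> i; rewrite /be /snoc; case: (unlift ord_max i) => [i'|] /=; first by rewrite alP.
  by rewrite hj.
Qed.


Lemma cover_list (l : seq V') : exists c, okc c /\ forall e, List.In e l -> inc c e.
Proof.
elim: l => [|e l [c [okc_c hc]]].
  by exists ([::], [::]); split => // d [].
case: e => [w|d].
- exists (w :: c.1, c.2); split.
    by move=> d hd i; right; apply: okc_c.
  move=> e [<-|he] /=; first by left.
  case: e he => [w'|d'] he /=; [right; exact: (hc _ he) | exact: (hc _ he)].
- exists (map (dx d) (enum 'I_(dn d)) ++ c.1, d :: c.2); split.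
    move=> d' [<-|hd'] i /=; first by apply: In_app_l; apply: In_map_seq; apply: In_enum.
    by apply: In_app_r; apply: okc_c.
  move=> e [<-|he] /=; first by left.
  case: e he => [w'|d'] he /=; [apply: In_app_r; exact: (hc _ he)| right; exact: (hc _ he)].
Qed.

Lemma cover_tuple n (z : 'I_n -> V') : exists c, okc c /\ forall i, inc c (z i).
Proof.
have [c [h1 h2]] := cover_list (map z (enum 'I_n)); exists c; split => // i.
by apply: h2; apply: In_map_seq; apply: In_enum.
Qed.

Lemma onestep : exists p' : forall n, L n -> RelW V' n,
  [/\ pm p', (forall n r (x : 'I_n -> V), p' n r (fun i => inl (x i)) <-> p n r x) &
      (forall n (r : L n.+1) (x : 'I_n -> V) (H : p _ (ex r) x),
          p' _ r (snoc (fun i => inl (x i)) (inr (Dem H))))].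
Proof.
pose VV (c : cfg) := epsilon (inhabits (fun n (_ : L n) (_ : 'I_n -> V') => True)) (localP c).
have VVP : forall c, okc c -> localP c (VV c).
  by move=> c hc; apply: epsilon_spec; apply: local_ex.
pose leS (A B : cfg -> Prop) := forall c, A c -> B c.
pose F0 (A : cfg -> Prop) := exists n (z : 'I_n -> V'), forall c, okc c -> (forall i, inc c (z i)) -> A c.
pose J0 (A : cfg -> Prop) := forall c, ~ A c.
have [U [FU UJ uU mU prU]] : exists U : (cfg -> Prop) -> Prop, [/\ (forall A, F0 A -> U A),
    (forall A, U A -> J0 A -> False), upc leS U, mtc (fun A B c => A c /\ B c) U &
    (forall A B, U (fun c => A c \/ B c) -> U A \/ U B)].
  apply: (@pft _ leS (fun A B c => A c /\ B c) (fun A B c => A c \/ B c)); rewrite /leS.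
  - by move=> x y z h1 h2 c /h1 /h2.
  - by move=> x y c [].
  - by move=> x y c [].
  - by move=> x y z h1 h2 c h; split; [apply: h1|apply: h2].
  - by move=> x y c h; left.
  - by move=> x y c h; right.
  - by move=> x y z h1 h2 c [h|h]; [apply: h1|apply: h2].
  - by move=> x y z c [h [h'|h']]; [left|right].
  - by move=> A B hAB [n [z hz]]; exists n, z => c h1 h2; apply: hAB; apply: hz.
  - move=> A B [n1 [z1 h1]] [n2 [z2 h2]].
    exists (n1 + n2), (fun i => match split i with inl i1 => z1 i1 | inr i2 => z2 i2 end) => c hc hz.
    split.
      apply: h1 => // i; have := hz (unsplit (inl i)); by rewrite unsplitK.
    apply: h2 => // i; have := hz (unsplit (inr i)); by rewrite unsplitK.
  - by exists (fun _ => True); exists 0, (fun i => False_rect _ (no_ord0 i)).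
  - by move=> x y h hy c hx; apply: (hy c); apply: h.
  - by move=> x y hx hy c [h|h]; [apply: (hx c)|apply: (hy c)].
  - move=> A [n [z hz]] hJ; have [c [hc1 hc2]] := cover_tuple z.
    exact: hJ c (hz c hc1 hc2).
pose p' n r (z : 'I_n -> V') := U (fun c => okc c /\ (forall i, inc c (z i)) /\ VV c n r z).
have UZ : forall n (z : 'I_n -> V'), U (fun c => okc c /\ forall i, inc c (z i)).
  by move=> n z; apply: FU; exists n, z => c h1 h2; split.
have uU' : forall A B, U A -> leS A B -> U B by move=> A B hA hAB; exact: uU hAB hA.
have Uempty : forall A, U A -> (forall c, A c -> False) -> False.
  by move=> A hA h; exact: UJ hA h.
exists p'; split.
- split.
  + move=> n k a r z; split.
      move=> h; apply: (uU' _ _ h) => c [hc [hz hv]]; split => //; split; first by move=> i; apply: hz.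
      by rewrite -(@lp_sub c (VV c) (VVP c hc) _ _ a r z hz).
    move=> h; apply: (uU' _ _ (mU _ _ (UZ _ z) h)) => c [[hc hz] [_ [_ hv]]]; split => //; split => //.
    by rewrite (@lp_sub c (VV c) (VVP c hc) _ _ a r z hz).
  + move=> n z h; apply: (Uempty _ h) => c [hc [_ hv]]; exact: (lp_zero (VVP c hc) hv).
  + move=> n z; apply: (uU' _ _ (UZ n z)) => c [hc hz]; split => //; split => //; exact: (lp_one (VVP c hc) hz).
  + move=> n r s z; split.
      move=> h; apply: prU; apply: (uU' _ _ h) => c [hc [hz hv]].
      by case: (proj1 (@lp_join c (VV c) (VVP c hc) _ r s z hz) hv) => h'; [left|right].
    case=> h; apply: (uU' _ _ h) => c [hc [hz hv]]; split => //; split => //;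
      apply/(@lp_join c (VV c) (VVP c hc) _ r s z hz); [left|right] => //.
  + move=> n r s z; split.
      move=> h; split; apply: (uU' _ _ h) => c [hc [hz hv]];
        have [h1 h2] := proj1 (@lp_meet c (VV c) (VVP c hc) _ r s z hz) hv; by [].
    case=> h1 h2; apply: (uU' _ _ (mU _ _ h1 h2)) => c [[hc [hz hv1]] [_ [_ hv2]]]; split => //; split => //.
    by apply/(@lp_meet c (VV c) (VVP c hc) _ r s z hz).
- move=> n r x; split.
    move=> h; apply: NNPP => hn; apply: (Uempty _ h) => c [hc [hz hv]]; apply: hn.
    exact: (proj1 (@lp_base c (VV c) (VVP c hc) _ r x hz) hv).
  move=> h; apply: (uU' _ _ (UZ n (fun i => inl (x i)))) => c [hc hz]; split => //; split => //.
  exact: (proj2 (@lp_base c (VV c) (VVP c hc) _ r x hz) h).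
- move=> n r x H; apply: (uU' _ _ (UZ _ (snoc (fun i => inl (x i)) (inr (Dem H))))) => c [hc hz].
  split => //; split => //.
  have hd : List.In (Dem H) c.2 by have := hz ord_max; rewrite snoc_max.
  exact: (lp_dem (VVP c hc) hd).
Qed.

End OneStep.

Definition goodstep (V : Type) (p : forall n, L n -> RelW V n) (p' : forall n, L n -> RelW (V' p) n) :=
  [/\ pm p', (forall n r (x : 'I_n -> V), p' n r (fun i => inl (x i)) <-> p n r x) &
      (forall n (r : L n.+1) (x : 'I_n -> V) (H : p _ (ex r) x),
          p' _ r (snoc (fun i => inl (x i)) (inr (Dem H))))].

Definition stepT (V : Type) (p : forall n, L n -> RelW V n) : forall n, L n -> RelW (V' p) n :=
  epsilon (inhabits (fun n (_ : L n) (_ : 'I_n -> V' p) => True)) (@goodstep V p).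

Fixpoint stg (W : Type) (phi : forall n, L n -> RelW W n) (k : nat) : {T : Type & forall n, L n -> RelW T n} :=
  match k with
  | 0 => existT _ W phi
  | k'.+1 => let s := stg phi k' in existT _ (V' (projT2 s)) (@stepT _ (projT2 s))
  end.

Section Colim.
Variables (W : Type) (phi : forall n, L n -> RelW W n).
Arguments phi : clear implicits.
Hypothesis hphi : pm phi.

Definition TT k := projT1 (stg phi k).
Definition ph k : forall n, L n -> RelW (TT k) n := projT2 (stg phi k).
Arguments ph k [n].

Lemma stg_good k : pm (ph k) /\ @goodstep _ (ph k) (ph k.+1).
Proof.
elim: k => [|k [hk gk]].
  have h0 : pm (ph 0) by [].
  split => //; rewrite /ph /=; apply: epsilon_spec; exact: onestep h0.
have h1 : pm (ph k.+1) by case: gk.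
split => //; rewrite /ph /=; apply: epsilon_spec; exact: onestep h1.
Qed.

Definition Wp := {k : nat & TT k}.
Definition upW (e : Wp) : Wp := existT TT (projT1 e).+1 (inl (projT2 e) : TT (projT1 e).+1).
Definition rep K (y : TT K) (e : Wp) := exists d, iter d upW e = existT TT K y.
Arguments rep : clear implicits.

Lemma tag_iter d e : projT1 (iter d upW e) = d + projT1 e.
Proof. by elim: d => //= d ->. Qed.

Lemma rep_up K y e : rep K y e -> rep K.+1 (inl y) e.
Proof. by case=> d hd; exists d.+1; rewrite /= hd. Qed.

Lemma rep_ex K e : projT1 e <= K -> exists y, rep K y e.
Proof.
move=> hK; have := tag_iter (K - projT1 e) e; rewrite subnK //.
case hd: (iter (K - projT1 e) upW e) => [K' y] /= hK'; subst K'.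
by exists y, (K - projT1 e).
Qed.

Lemma rep_uniq K y1 y2 e : rep K y1 e -> rep K y2 e -> y1 = y2.
Proof.
case=> d1 h1 [d2 h2].
have : d1 = d2.
  have := tag_iter d1 e; have := tag_iter d2 e; rewrite h1 h2 /= => ->.
  by move/eqP; rewrite eqn_add2r => /eqP.
move=> hd; subst d2; rewrite h1 in h2.
exact: (Eqdep_dec.inj_pair2_eq_dec _ PeanoNat.Nat.eq_dec _ _ _ _ h2).
Qed.

Definition reps K n (y : 'I_n -> TT K) (x : 'I_n -> Wp) := forall i, rep K (y i) (x i).
Arguments reps K [n] y x.

Lemma reps_ex K0 n (x : 'I_n -> Wp) : exists K, K0 <= K /\ exists y, @reps K n y x.
Proof.
exists (maxn K0 (\max_i projT1 (x i))); split; first exact: leq_maxl.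
apply: (@choice_ord _ n (fun i t => rep _ t (x i))) => i; apply: rep_ex.
by apply: leq_trans (leq_maxr _ _); exact: (leq_bigmax (F := fun i => projT1 (x i)) i).
Qed.

Lemma ph_up K n s (y : 'I_n -> TT K) : ph K.+1 s (fun i => inl (y i)) <-> ph K s y.
Proof. by case: (stg_good K) => _ [_ h _]; apply: h. Qed.

Lemma reps_transfer n (x : 'I_n -> Wp) s d : forall K K' y y', K' = d + K ->
  reps K y x -> reps K' y' x -> (ph K s y <-> ph K' s y').
Proof.
elim: d => [|d IH] K K' y y' hK hy hy'.
  subst K'; have -> : y = y' by apply: functional_extensionality => i; apply: rep_uniq (hy i) (hy' i).
  done.
rewrite -(@ph_up K n s y); apply: (IH K.+1 K') => //; first by rewrite hK addSnnS.
by move=> i; apply: rep_up.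
Qed.

Lemma reps_iff n (x : 'I_n -> Wp) s K K' y y' : reps K y x -> reps K' y' x -> (ph K s y <-> ph K' s y').
Proof.
move=> hy hy'; case: (leqP K K') => hKK.
  by apply: (@reps_transfer n x s (K' - K) K K' y y') => //; rewrite subnK.
by apply: iff_sym; apply: (@reps_transfer n x s (K - K') K' K y' y) => //; rewrite subnK // ltnW.
Qed.

Definition phip n (s : L n) (x : 'I_n -> Wp) := exists K y, @reps K n y x /\ ph K s y.

Lemma phipE n s (x : 'I_n -> Wp) K y : reps K y x -> (phip s x <-> ph K s y).
Proof.
move=> hy; split; last by move=> h; exists K, y.
by case=> K' [y' [hy' h]]; apply/(reps_iff _ hy hy').
Qed.
Arguments phipE {n} s {x K y} _.

Lemma phip_pm : pm phip.
Proof.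
split.
- move=> n k a r z; have [K [_ [y hy]]] := reps_ex 0 z.
  rewrite (phipE _ hy) (phipE r (y := fun i => y (a i))); last by move=> i; apply: hy.
  by case: (stg_good K) => [[hs _ _ _ _] _]; apply: hs.
- move=> n z; have [K [_ [y hy]]] := reps_ex 0 z; rewrite (phipE _ hy).
  by case: (stg_good K) => [[_ h _ _ _] _]; apply: h.
- move=> n z; have [K [_ [y hy]]] := reps_ex 0 z; rewrite (phipE _ hy).
  by case: (stg_good K) => [[_ _ h _ _] _]; apply: h.
- move=> n r s z; have [K [_ [y hy]]] := reps_ex 0 z; rewrite !(phipE _ hy).
  by case: (stg_good K) => [[_ _ _ h _] _]; apply: h.
- move=> n r s z; have [K [_ [y hy]]] := reps_ex 0 z; rewrite !(phipE _ hy).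
  by case: (stg_good K) => [[_ _ _ _ h] _]; apply: h.
Qed.

Lemma phip_ex n (r : L n.+1) x : phip (ex r) x <-> exW (phip r) x.
Proof.
split; last by case=> y h; apply: (pm_exlow phip_pm h).
have [K [_ [y hy]]] := reps_ex 0 x; rewrite (phipE _ hy) => H.
have hH := (match stg_good K with conj _ (And3 _ _ h) => h end) n r y H.
exists (existT TT K.+1 (inr (Dem H) : TT K.+1)).
apply/(phipE r (K := K.+1) (y := snoc (fun i => inl (y i)) (inr (Dem H)))) => // i.
rewrite /snoc; case: (unlift ord_max i) => [j|]; first by apply: rep_up.
by exists 0.
Qed.

Lemma phip_base n s (x : 'I_n -> W) : phip s (fun i => existT TT 0 (x i)) <-> phi n s x.
Proof. by rewrite (phipE s (K := 0) (y := x)) // => i; exists 0. Qed.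

End Colim.

End Lat.

Theorem lemma4p14 (L : PEAlg) (W : Type) (phi : forall n, L n -> RelW W n) :
  PE_axioms_hold L -> almost_morphism phi ->
  exists (Wp : Type) (phip : forall n, L n -> RelW Wp n),
    [/\ morphism phip,
        (forall n (a b : L n), phip n a = phip n b -> phi n a = phi n b) &
        ((forall n, injective (phi n)) -> forall n, injective (phip n))].
Proof.
move=> [A1 [A2 [A3 [A7 [A8 [A9 A10]]]]]] [hs [h0 [h1 [hj [hm hex]]]]].
have hphi : @pm L W phi.
  split.
  - by move=> n k a r x; rewrite hs.
  - by move=> n x; rewrite h0.
  - by move=> n x; rewrite h1.
  - by move=> n r s x; rewrite hj.
  - by move=> n r s x; rewrite hm.
have hp := phip_pm A1 A2 A3 A7 A9 A10 hphi.
have hx := phip_ex A1 A2 A3 A7 A8 A9 A10 hphi.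
have hb := phip_base A1 A2 A3 A7 A9 A10 hphi.
have ker : forall n (a b : L n), @phip L W phi n a = @phip L W phi n b -> phi n a = phi n b.
  move=> n a b hab; apply: functional_extensionality => x; apply: propositional_extensionality.
  by rewrite -!hb hab.
exists (Wp phi), (@phip L W phi); split => //; last first.
  by move=> hinj n a b hab; apply: hinj; apply: ker.
case: hp => ps p0 p1 pj pmt.
split; last first.
  by move=> n r; apply: functional_extensionality => x; apply: propositional_extensionality; apply: hx.
split.
  move=> n k a r; apply: functional_extensionality => x; apply: propositional_extensionality; exact: ps.
split.
  move=> n; apply: functional_extensionality => x; apply: propositional_extensionality; split => //; exact: p0.
split.
  by move=> n; apply: functional_extensionality => x; apply: propositional_extensionality; split.
split.
  move=> n r s; apply: functional_extensionality => x; apply: propositional_extensionality; exact: pj.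
split.
  move=> n r s; apply: functional_extensionality => x; apply: propositional_extensionality; exact: pmt.
by move=> n r x /hx.
Qed.
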